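(* Under the hypotheses of the ratio-version correlator cluster expansion, $$\langle O_AO_B\rangle_c=\langle O_A\rangle\langle O_B\rangle\left[\exp\Bigg\{\sum_{\substack{\Gamma\subseteq\mathcal L_{AB}\text{ finite},\ G_\Gamma\text{ connected}\\ \mathrm{supp}(\Gamma)\cap A\ne\emptyset,\ \mathrm{supp}(\Gamma)\cap B\ne\emptyset}}\big(\mathfrak K^{AB}(\Gamma)+\mathfrak K(\Gamma)-\mathfrak K^{A}(\Gamma)-\mathfrak K^{B}(\Gamma)\big)\Bigg\}-1\right],$$ where $\mathfrak K^X(\Gamma):=\sum_{\mathbf W\text{ connected},\ \text{loop-set}(\mathbf W)=\Gamma}\phi(\mathbf W)Z^X_{\mathbf W}$ for $X\in\{\emptyset,A,B,AB\}$, $\mathfrak K=\mathfrak K^\emptyset$.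
   Context: Let $|\psi\rangle$ be a PEPS on a finite graph $G=(V,E)$; $A,B\subseteq V$ disjoint, $O_A,O_B$ operators on the physical sites of $A$, $B$. $\mathcal Z=\mathcal Z^\emptyset=\langle\psi|\psi\rangle>0$; $\mathcal Z^X$ for $X=A,B,AB$ is the network for $\langle\psi|O_X|\psi\rangle$ with $O_{AB}=O_AO_B$; $\langle O_X\rangle=\mathcal Z^X/\mathcal Z$, $\langle O_AO_B\rangle_c=\langle O_AO_B\rangle-\langle O_A\rangle\langle O_B\rangle$. A BP fixed point of $\mathcal Z$ (messages $\mu_{v\to w}$, $I_{vw}=\mu_{v\to w}\star\mu_{w\to v}\ne0$, vertex tensor contracted with all incoming messages but one proportional to the outgoing one) is used for all networks; $\mathcal P^\perp_{vw}=\mathbb 1-\mu_{v\to w}\otimes\mu_{w\to v}/I_{vw}$. $\tilde Z^X_F$: contraction of $\mathcal Z^X$ with $\mathcal P^\perp$ on edges of $F$, $\mu\otimes\mu/I$ elsewhere; $Z^X_{BP}=\tilde Z^X_\emptyset$. $\mathcal L_{AB}$: connected subgraphs with at least one edge in which every vertex outside $A\cup B$ has degree $\ge2$; weights $Z^X_l=\tilde Z^X_{E(l)}/Z^X_{BP}$; supports are vertex sets; compatible = vertex-disjoint. Clusters $\mathbf W=\{(l_i,\eta_i)\}$ over $\mathcal L_{AB}$, $Z^X_{\mathbf W}=\prod(Z^X_{l_i})^{\eta_i}$, loop-set$(\mathbf W)=\{l_i\}$; interaction graph: $\eta_i$ vertices per $l_i$, adjacent iff equal or incompatible; connected if connected;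 $G_\Gamma$ is the interaction graph of $\{(l,1)\}_{l\in\Gamma}$, $\mathrm{supp}(\Gamma)=\bigcup_{l\in\Gamma}\mathrm{supp}(l)$. Ursell function $\phi(\mathbf W)=\frac1{\prod\eta_i!}\sum_C(-1)^{|E(C)|}$ over connected spanning subgraphs of the interaction graph. The ratio-version correlator expansion hypotheses: $Z^X_{BP}\ne0$, $\langle O_A\rangle,\langle O_B\rangle\ne0$, and absolutely convergent cluster expansions $\log\mathcal Z^X=\log Z^X_{BP}+\sum_{\mathbf W\text{ conn.}}\phi(\mathbf W)Z^X_{\mathbf W}$ over $\mathcal L_{AB}$ for all $X\in\{\emptyset,A,B,AB\}$. *)

(* Defs.v *)
From HB Require Import structures.
From mathcomp Require Import all_boot all_order all_algebra.
From mathcomp Require Import boolp reals.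
From mathcomp Require classical_sets.
From mathcomp.analysis Require Import sequences exp trigo.
From mathcomp Require Import complex.

Set Implicit Arguments.
Unset Strict Implicit.
Unset Printing Implicit Defensive.

Import Order.TTheory GRing.Theory Num.Theory.
Local Open Scope ring_scope.

Section ComplexAnalysis.
Variable R : realType.
Local Notation C := R[i].

Definition expC (z : C) : C :=
  (expR (complex.Re z))%:C%C * ((cos (complex.Im z)) +i* (sin (complex.Im z)))%C.

(* [has_sum f S]: the (possibly infinite) family (f x)_{x : T} sums to S in the
   sense of nets of finite partial sums (unconditional convergence). *)
Definition has_sum (T : eqType) (f : T -> C) (S : C) : Prop :=
  forall eps : R, 0 < eps -> exists F0 : seq T,
    forall F : seq T, uniq F -> {subset F0 <= F} ->
      `| \sum_(x <- F) f x - S | < eps%:C%C.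

Definition abs_summable (T : eqType) (f : T -> C) : Prop :=
  exists M : R, forall F : seq T, uniq F -> \sum_(x <- F) `| f x | <= M%:C%C.

(* the value of the sum (the unique S with has_sum f S, if any; 0 otherwise) *)
Definition csum (T : eqType) (f : T -> C) : C := classical_sets.xget 0 (fun S => has_sum f S).

End ComplexAnalysis.

Section PEPS.
Variable R : realType.
Local Notation C := R[i].

(* The finite graph G = (V, E): every edge e has two distinct end points
   src e, tgt e (the orientation is only a bookkeeping device). *)
Variables (V E : finType) (src tgt : E -> V).

Definition simple_graph : Prop :=
  (forall e, src e != tgt e) /\
  (forall e e', [set src e; tgt e] = [set src e'; tgt e'] -> e = e').

Definition incident (v : V) (e : E) : bool := (src e == v) || (tgt e == v).

(* virtual (bond) index space of each edge, physical space of each site *)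
Variables (I : E -> finType) (P : V -> finType).

Definition vconf := {dffun forall e : E, I e}.
Definition pconf := {dffun forall v : V, P v}.

(* The PEPS tensor at v: T v s x, with s the physical index and x an
   assignment of virtual indices; locality says it only depends on the
   indices of the edges incident to v. *)
Definition peps_tensors := forall v : V, P v -> vconf -> C.

Definition is_local (T : peps_tensors) : Prop :=
  forall v s (x y : vconf), (forall e, incident v e -> x e = y e) ->
    T v s x = T v s y.

(* Operators on the physical Hilbert space: matrices indexed by physical
   configurations, Op s' s = <s'| Op |s>. *)
Definition operator := pconf -> pconf -> C.

Definition op_id : operator := fun s' s => (s' == s)%:R.
Definition op_mul (O1 O2 : operator) : operator :=
  fun s' s => \sum_(t : pconf) O1 s' t * O2 t s.

(* Op acts on the physical sites of X only: Op = O_X (x) 1_{V \ X}. *)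
Definition supported_on (X : {set V}) (Op : operator) : Prop :=
  (forall s' s : pconf, (exists2 v, v \notin X & s' v != s v) -> Op s' s = 0) /\
  (forall s' s t' t : pconf,
     (forall v, v \in X -> s' v = t' v /\ s v = t v) ->
     (forall v, v \notin X -> s' v = s v /\ t' v = t v) ->
     Op s' s = Op t' t).

(* In the double-layer network each edge e carries a ket index and a bra index;
   cutting the edge, the src-side (aS,bS) and tgt-side (aT,bT) index pairs are
   joined by an inserted matrix M e (aS,bS) (aT,bT). *)
Definition edge_insertion := forall e : E, I e -> I e -> I e -> I e -> C.

Definition ins_id : edge_insertion :=
  fun e aS bS aT bT => ((aS == aT) && (bS == bT))%:R.
Arguments ins_id : clear implicits.

Definition side (v : V) (xS xT : vconf) : vconf :=
  [ffun e : E => if src e == v then xS e else xT e].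

(* contraction of the network <psi| Op |psi> with matrices M inserted on edges *)
Definition contract (T : peps_tensors) (Op : operator) (M : edge_insertion) : C :=
  \sum_(s' : pconf) \sum_(s : pconf)
  \sum_(kS : vconf) \sum_(kT : vconf) \sum_(bS : vconf) \sum_(bT : vconf)
    Op s' s
    * (\prod_(v : V) ((T v (s' v) (side v bS bT))^*)%C)
    * (\prod_(v : V) T v (s v) (side v kS kT))
    * (\prod_(e : E) M e (kS e) (bS e) (kT e) (bT e)).

Definition Znet (T : peps_tensors) (Op : operator) : C := contract T Op ins_id.

Definition expval (T : peps_tensors) (Op : operator) : C :=
  Znet T Op / Znet T op_id.

Definition correlator (T : peps_tensors) (OA OB : operator) : C :=
  expval T (op_mul OA OB) - expval T OA * expval T OB.

(* BP messages: mu e true = mu_{src e -> tgt e}, mu e false = mu_{tgt e -> src e};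
   a message is a vector on the doubled bond space (ket index, bra index). *)
Definition messages := forall e : E, bool -> I e -> I e -> C.

Definition Imsg (mu : messages) (e : E) : C :=
  \sum_(a : I e) \sum_(b : I e) mu e true a b * mu e false a b.

(* message arriving at v along e' *)
Definition incoming (mu : messages) (v : V) (e' : E) : I e' -> I e' -> C :=
  mu e' (src e' != v).
Arguments incoming mu v e' : clear implicits.

(* the double-layer vertex tensor of Z at v, contracted with all incoming
   messages except along e; the result is a vector on the doubled bond of e.
   (The sum runs over full virtual configurations, so the result carries the
   harmless positive factor prod_{e'' not incident to v} |I e''|^2, which does
   not affect proportionality.) *)
Definition bp_out (T : peps_tensors) (mu : messages) (v : V) (e : E)
    (a b : I e) : C :=
  \sum_(sv : P v) \sum_(k : vconf | k e == a) \sum_(k' : vconf | k' e == b)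
    T v sv k * ((T v sv k')^*)%C
    * \prod_(e' : E | incident v e' && (e' != e)) incoming mu v e' (k e') (k' e').
Arguments bp_out T mu v e a b : clear implicits.

Definition bp_fixed_point (T : peps_tensors) (mu : messages) : Prop :=
  (forall e, Imsg mu e != 0) /\
  (forall e (dir : bool), exists lam : C, forall a b,
     bp_out T mu (if dir then src e else tgt e) e a b = lam * mu e dir a b).

(* mu_{v->w} (x) mu_{w->v} / I_vw, oriented so that the message arriving at
   each end point is contracted with that end point's tensor *)
Definition Pbp (mu : messages) : edge_insertion :=
  fun e aS bS aT bT => mu e false aS bS * mu e true aT bT / Imsg mu e.
Arguments Pbp : clear implicits.

Definition Pperp (mu : messages) : edge_insertion :=
  fun e (aS bS aT bT : I e) => ins_id e aS bS aT bT - Pbp mu e aS bS aT bT.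
Arguments Pperp : clear implicits.

Definition Ztilde (T : peps_tensors) (mu : messages) (Op : operator)
    (F : {set E}) : C :=
  contract T Op (fun e => if e \in F then Pperp mu e else Pbp mu e).

Definition ZBP T mu Op : C := Ztilde T mu Op set0.

(* a subgraph with at least one edge is represented by its edge set l *)

Definition supp (l : {set E}) : {set V} := [set v | [exists e in l, incident v e]].

Definition deg (l : {set E}) (v : V) : nat := #|[set e in l | incident v e]|.

Definition ladj (l : {set E}) : rel V := fun v w =>
  [exists e in l, ((src e == v) && (tgt e == w)) || ((src e == w) && (tgt e == v))].

Definition is_loop (SA SB : {set V}) (l : {set E}) : bool :=
  [&& l != set0,
      [forall v in supp l, forall w in supp l, connect (ladj l) v w] &
      [forall v in supp l, (v \notin SA :|: SB) ==> (2 <= deg l v)%N]].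

Definition compatible (l l' : {set E}) : bool := [disjoint supp l & supp l'].

Definition Zloop T mu Op (l : {set E}) : C := Ztilde T mu Op l / ZBP T mu Op.

(* a cluster W = {(l_i, eta_i)} is encoded by its multiplicity function;
   W l = 0 means l does not occur. *)
Definition cluster := {ffun {set E} -> nat}.

Definition is_cluster (SA SB : {set V}) (W : cluster) : Prop :=
  (forall l, 0 < W l -> is_loop SA SB l)%N /\ (exists l, 0 < W l)%N.

Definition loopset (W : cluster) : {set {set E}} := [set l | 0 < W l]%N.

(* vertices of the interaction graph: eta_i copies (l_i, j), j < eta_i *)
Definition ivert (W : cluster) := {l : {set E} & 'I_(W l)}.

Definition iadj (W : cluster) : rel (ivert W) := fun x y =>
  (x != y) && ((tag x == tag y) || ~~ compatible (tag x) (tag y)).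
Arguments iadj : clear implicits.

Definition cluster_connected (W : cluster) : bool :=
  [forall x : ivert W, forall y : ivert W, connect (iadj W) x y].

Definition iedges (W : cluster) : {set {set ivert W}} :=
  [set p | [exists x, exists y, (p == [set x; y]) && iadj W x y]].

Definition conn_spanning (W : cluster) (Cs : {set {set ivert W}}) : bool :=
  (Cs \subset iedges W) &&
  [forall x, forall y, connect (fun u v => [set u; v] \in Cs) x y].

Definition ursell (W : cluster) : C :=
  (\prod_(l : {set E}) ((W l)`!)%:R)^-1
  * \sum_(Cs : {set {set ivert W}} | conn_spanning Cs) (-1) ^+ #|Cs|.

Definition Zcluster T mu Op (W : cluster) : C :=
  \prod_(l : {set E}) (Zloop T mu Op l) ^+ (W l).

Definition cl_term SA SB T mu Op (W : cluster) : C :=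
  if pselect (is_cluster SA SB W /\ cluster_connected W)
  then ursell W * Zcluster T mu Op W else 0.

(* hypothesis: absolutely convergent cluster expansion
   log Z^X = log Z^X_BP + sum_{W connected} phi(W) Z^X_W,
   read (without choice of branch of log) as Z^X = Z^X_BP exp(sum ...) *)
Definition cluster_expansion SA SB T mu Op : Prop :=
  abs_summable (cl_term SA SB T mu Op) /\
  Znet T Op = ZBP T mu Op * expC (csum (cl_term SA SB T mu Op)).

Definition Kfrak SA SB T mu Op (Gam : {set {set E}}) : C :=
  csum (fun W : cluster =>
          if loopset W == Gam then cl_term SA SB T mu Op W else 0).

Definition gamma_connected (Gam : {set {set E}}) : bool :=
  [forall l in Gam, forall l' in Gam,
     connect (fun x y => [&& x \in Gam, y \in Gam, x != y & ~~ compatible x y])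
             l l'].

Definition suppG (Gam : {set {set E}}) : {set V} := \bigcup_(l in Gam) supp l.

Definition gamma_ok SA SB (Gam : {set {set E}}) : bool :=
  [&& [forall l in Gam, is_loop SA SB l], gamma_connected Gam,
      suppG Gam :&: SA != set0 & suppG Gam :&: SB != set0].

End PEPS.

(* Main.v *)
Require Import Defs.
From HB Require Import structures.
From mathcomp Require Import all_boot all_order all_algebra.
From mathcomp Require Import boolp reals.
From mathcomp Require Import complex.
From mathcomp Require classical_sets.
From mathcomp.analysis Require Import sequences exp trigo.
From mathcomp Require Import ring lra.
Import Order.TTheory GRing.Theory Num.Theory.
Local Open Scope ring_scope.

Set Implicit Arguments.
Unset Strict Implicit.
Unset Printing Implicit Defensive.


Section HasSum.
Variable R : realType.
Local Notation C := R[i].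

Lemma normC_ge0 (z : C) : 0 <= `|z|. Proof. exact: normr_ge0. Qed.

Lemma small_eq0 (z : C) : (forall e : R, 0 < e -> `|z| < e%:C%C) -> z = 0.
Proof.
move=> H; have [//|nz] := eqVneq z 0; exfalso.
have hp : 0 < `|z| by rewrite normr_gt0.
have e : `|z| = (complex.Re `|z|)%:C%C by rewrite normc_def.
have hr : 0 < complex.Re `|z| by rewrite -ltcR -e.
by have := H _ hr; rewrite -e ltxx.
Qed.

Lemma uniq_undup_cat (T : eqType) (a b : seq T) :
  uniq (undup (a ++ b)) /\ {subset a <= undup (a ++ b)} /\ {subset b <= undup (a ++ b)}.
Proof.
split; first exact: undup_uniq.
by split => x hx; rewrite mem_undup mem_cat hx ?orbT.
Qed.

Lemma has_sum_unique (T : eqType) (f : T -> C) S1 S2 :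
  has_sum f S1 -> has_sum f S2 -> S1 = S2.
Proof.
move=> h1 h2; apply/eqP; rewrite -subr_eq0; apply/eqP; apply: small_eq0 => e e0.
have e2 : 0 < e / 2 by rewrite divr_gt0.
have [F1 H1] := h1 _ e2; have [F2 H2] := h2 _ e2.
have [u [s1 s2]] := uniq_undup_cat F1 F2.
have := H1 _ u s1; have := H2 _ u s2.
set s := \sum_(x <- _) _ => a b.
have -> : S1 - S2 = (s - S2) - (s - S1) by ring.
apply: (le_lt_trans (ler_normB _ _)).
have -> : e%:C%C = (e/2)%:C%C + (e/2)%:C%C by rewrite -rmorphD /= -splitr.
exact: ltrD.
Qed.

Lemma has_sum_ext (T : eqType) (f g : T -> C) S :
  (forall x, f x = g x) -> has_sum f S -> has_sum g S.
Proof. by move=> fg; have -> : f = g by apply: funext. Qed.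

Lemma has_sum0 (T : eqType) : has_sum (fun _ : T => 0 : C) 0.
Proof.
move=> e e0; exists [::] => F _ _; rewrite big1 // subr0 normr0.
by rewrite ltcR.
Qed.

Lemma has_sumD (T : eqType) (f g : T -> C) S S' :
  has_sum f S -> has_sum g S' -> has_sum (fun x => f x + g x) (S + S').
Proof.
move=> h1 h2 e e0.
have e2 : 0 < e / 2 by rewrite divr_gt0.
have [F1 H1] := h1 _ e2; have [F2 H2] := h2 _ e2.
exists (F1 ++ F2) => F u sub.
have s1 : {subset F1 <= F} by move=> x hx; apply: sub; rewrite mem_cat hx.
have s2 : {subset F2 <= F} by move=> x hx; apply: sub; rewrite mem_cat hx orbT.
rewrite big_split /=.
set a := \sum_(i <- F) f i; set b := \sum_(i <- F) g i.
have -> : a + b - (S + S') = (a - S) + (b - S') by ring.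
apply: (le_lt_trans (ler_normD _ _)).
have -> : e%:C%C = (e/2)%:C%C + (e/2)%:C%C by rewrite -rmorphD /= -splitr.
by apply: ltrD; [apply: H1|apply: H2].
Qed.

Lemma has_sumN (T : eqType) (f : T -> C) S :
  has_sum f S -> has_sum (fun x => - f x) (- S).
Proof.
move=> h e e0; have [F0 H] := h _ e0; exists F0 => F u s.
by rewrite sumrN -opprD normrN; apply: H.
Qed.

Lemma has_sum_big (T : eqType) (J : Type) (r : seq J) (f : J -> T -> C) (S : J -> C) :
  (forall j, has_sum (f j) (S j)) ->
  has_sum (fun x => \sum_(j <- r) f j x) (\sum_(j <- r) S j).
Proof.
move=> H; elim: r => [|j r IH].
  by rewrite big_nil; apply: has_sum_ext (has_sum0 T) => x; rewrite big_nil.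
rewrite big_cons; apply: has_sum_ext (has_sumD (H j) IH) => x.
by rewrite big_cons.
Qed.

Lemma csum_eq (T : eqType) (f : T -> C) S : has_sum f S -> csum f = S.
Proof.
move=> h; rewrite /csum.
have := @classical_sets.xgetPex _ 0 (fun S => has_sum f S) (ex_intro _ S h).
by move/has_sum_unique; apply.
Qed.

End HasSum.

Section Exist.
Variable R : realType.
Local Notation C := R[i].

Lemma sum_sub_le (T : eqType) (h : T -> R) (F0 F : seq T) :
  (forall x, 0 <= h x) -> uniq F0 -> uniq F -> {subset F0 <= F} ->
  \sum_(x <- F0) h x <= \sum_(x <- F) h x.
Proof.
move=> h0 u0 u s.
have -> : \sum_(x <- F) h x = \sum_(x <- F | x \in F0) h x + \sum_(x <- F | x \notin F0) h x.
  exact: bigID.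
have -> : \sum_(i <- F | i \in F0) h i = \sum_(i <- F0) h i.
  rewrite -big_filter; apply: perm_big; apply: uniq_perm.
  - exact: filter_uniq.
  - exact: u0.
  by move=> x; rewrite mem_filter; case: (boolP (x \in F0)) => // /s ->.
by rewrite lerDl sumr_ge0.
Qed.

Lemma real_sum_exists (T : eqType) (h : T -> R) (M : R) :
  (forall x, 0 <= h x) -> (forall F, uniq F -> \sum_(x <- F) h x <= M) ->
  exists s, forall e, 0 < e -> exists F0 : seq T, forall F, uniq F -> {subset F0 <= F} ->
    `|\sum_(x <- F) h x - s| < e.
Proof.
move=> h0 hM.
pose E : classical_sets.set R := fun r => exists F : seq T, uniq F /\ r = \sum_(x <- F) h x.
have hs : classical_sets.has_sup E.
  split; first by exists 0; exists [::]; rewrite big_nil.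
  by exists M => r [F [u ->]]; apply: hM.
exists (sup E) => e e0.
have [r [F0 [u0 ->]] hr] := sup_adherent e0 hs.
exists F0 => F u s.
have le1 := sum_sub_le h0 u0 u s.
have le2 : \sum_(x <- F) h x <= sup E by apply: sup_upper_bound => //; exists F.
rewrite ler0_norm ?subr_le0 //; lra.
Qed.

Lemma norm_ReC (z : C) : `|complex.Re z| <= complex.Re `|z|.
Proof.
rewrite normc_def /=; have := normc_ge_Re z.
by rewrite normc_def lecR.
Qed.

Lemma norm_ImC (z : C) : `|complex.Im z| <= complex.Re `|z|.
Proof.
rewrite normc_def /= -sqrtr_sqr ler_sqrt ?lerDr ?sqr_ge0 ?addr_ge0 ?sqr_ge0 //.
Qed.

Lemma sumC (T : eqType) (f : T -> C) (F : seq T) :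
  \sum_(x <- F) f x =
  (\sum_(x <- F) complex.Re (f x))%:C%C + 'i%C * (\sum_(x <- F) complex.Im (f x))%:C%C.
Proof.
elim: F => [|x F IH]; first by rewrite !big_nil mulr0 addr0.
rewrite !big_cons IH !rmorphD /= mulrDr.
rewrite {1}(complexE (f x)); ring.
Qed.

Lemma normC_le (a b : R) :
  `|(a%:C%C + 'i%C * b%:C%C : C)| <= (`|a| + `|b|)%:C%C.
Proof.
apply: (le_trans (ler_normD _ _)).
rewrite normrM rmorphD /=.
have hr (x : R) : `|(x%:C%C : C)| = (`|x|)%:C%C by rewrite normc_def /= expr0n addr0 sqrtr_sqr.
rewrite !hr.
have -> : `|('i%C : C)| = 1 by rewrite normc_def /= expr0n expr1n add0r sqrtr1.
by rewrite mul1r.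
Qed.

Lemma abs_summable_has_sum (T : eqType) (f : T -> C) :
  abs_summable f -> exists S, has_sum f S.
Proof.
move=> [M hM].
have hM' : forall F, uniq F -> \sum_(x <- F) complex.Re `|f x| <= M.
  move=> F u; have := hM F u; rewrite sumC lecE /=.
  by move=> /andP[_]; rewrite big1_eq ?mulr0 ?mul0r ?subrr ?addr0 ?subr0.
pose h1 x := (`|complex.Re (f x)| + complex.Re (f x)) / 2.
pose h2 x := (`|complex.Re (f x)| - complex.Re (f x)) / 2.
pose h3 x := (`|complex.Im (f x)| + complex.Im (f x)) / 2.
pose h4 x := (`|complex.Im (f x)| - complex.Im (f x)) / 2.
have bnd (h : T -> R) : (forall x, 0 <= h x /\ h x <= complex.Re `|f x|) ->
  exists s, forall e, 0 < e -> exists F0 : seq T, forall F, uniq F -> {subset F0 <= F} ->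
    `|\sum_(x <- F) h x - s| < e.
  move=> hh; apply: (@real_sum_exists _ h M); first by move=> x; case: (hh x).
  move=> F u; apply: le_trans (hM' F u); apply: ler_sum => x _; by case: (hh x).
have nb (a N : R) : `|a| <= N -> [/\ 0 <= (`|a| + a)/2, (`|a| + a)/2 <= N,
     0 <= (`|a| - a)/2 & (`|a| - a)/2 <= N].
  move=> aN; have k1 := ler_norm a; have k2 : - a <= `|a| by rewrite -normrN ler_norm.
  split; lra.
have [s1 H1] := bnd h1 (fun x => let: And4 a b _ _ := nb _ _ (norm_ReC (f x)) in conj a b).
have [s2 H2] := bnd h2 (fun x => let: And4 _ _ a b := nb _ _ (norm_ReC (f x)) in conj a b).
have [s3 H3] := bnd h3 (fun x => let: And4 a b _ _ := nb _ _ (norm_ImC (f x)) in conj a b).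
have [s4 H4] := bnd h4 (fun x => let: And4 _ _ a b := nb _ _ (norm_ImC (f x)) in conj a b).
exists ((s1 - s2)%:C%C + 'i%C * (s3 - s4)%:C%C) => e e0.
have e4 : 0 < e / 4 by rewrite divr_gt0.
have [F1 G1] := H1 _ e4; have [F2 G2] := H2 _ e4.
have [F3 G3] := H3 _ e4; have [F4 G4] := H4 _ e4.
exists (F1 ++ F2 ++ F3 ++ F4) => F u sub.
have g1 : `|\sum_(x <- F) h1 x - s1| < e/4 by apply: G1 => // x hx; apply: sub; rewrite !mem_cat hx.
have g2 : `|\sum_(x <- F) h2 x - s2| < e/4 by apply: G2 => // x hx; apply: sub; rewrite !mem_cat hx !orbT.
have g3 : `|\sum_(x <- F) h3 x - s3| < e/4 by apply: G3 => // x hx; apply: sub; rewrite !mem_cat hx !orbT.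
have g4 : `|\sum_(x <- F) h4 x - s4| < e/4 by apply: G4 => // x hx; apply: sub; rewrite !mem_cat hx !orbT.
rewrite sumC.
have eRe : \sum_(x <- F) complex.Re (f x) = \sum_(x <- F) h1 x - \sum_(x <- F) h2 x.
  rewrite -sumrB; apply: eq_bigr => y _; by rewrite /h1 /h2; field.
have eIm : \sum_(x <- F) complex.Im (f x) = \sum_(x <- F) h3 x - \sum_(x <- F) h4 x.
  rewrite -sumrB; apply: eq_bigr => y _; by rewrite /h3 /h4; field.
rewrite eRe eIm.
set a1 := \sum_(x <- F) h1 x; set a2 := \sum_(x <- F) h2 x.
set a3 := \sum_(x <- F) h3 x; set a4 := \sum_(x <- F) h4 x.
have -> : (a1 - a2)%:C%C + 'i%C * (a3 - a4)%:C%C - ((s1 - s2)%:C%C + 'i%C * (s3 - s4)%:C%C)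
   = ((a1 - s1) - (a2 - s2))%:C%C + 'i%C * ((a3 - s3) - (a4 - s4))%:C%C :> C.
  rewrite !rmorphB /=; ring.
apply: (le_lt_trans (normC_le _ _)); rewrite ltcR.
have n1 := ler_normB (a1 - s1) (a2 - s2).
have n2 := ler_normB (a3 - s3) (a4 - s4).
lra.
Qed.

End Exist.

Section ExpC.
Variable R : realType.
Local Notation C := R[i].

Lemma expCD (a b : C) : expC (a + b) = expC a * expC b.
Proof.
case: a => a1 a2; case: b => b1 b2; rewrite /expC /=.
rewrite expRD cosD sinD.
apply/eqP; rewrite eq_complex /=; apply/andP; split; apply/eqP; ring.
Qed.

Lemma expC0 : expC (0 : C) = 1.
Proof.
rewrite /expC /= expR0 cos0 sin0.
by apply/eqP; rewrite eq_complex /=; apply/andP; split; apply/eqP; ring.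
Qed.

Lemma expC_neq0 (a : C) : expC a != 0.
Proof.
apply/negP => /eqP h.
have := expCD a (- a); rewrite subrr expC0 h mul0r.
by move/eqP; rewrite oner_eq0.
Qed.

Lemma expCN (a : C) : expC (- a) = (expC a)^-1.
Proof.
apply: (mulfI (expC_neq0 a)); rewrite -expCD subrr expC0 mulfV //.
exact: expC_neq0.
Qed.

End ExpC.

Lemma cross_sum (K : comNzRingType) (X : finType) (m : X -> X -> X)
  (f1 g1 f2 g2 : X -> K) :
  (forall x y, m (m x y) (m y x) = x) ->
  (forall x y, f1 (m x y) = f1 x) -> (forall x y, f2 (m x y) = f2 x) ->
  (forall x y, g1 (m x y) = g1 y) -> (forall x y, g2 (m x y) = g2 y) ->
  (\sum_x f1 x * g1 x) * (\sum_x f2 x * g2 x) =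
  (\sum_x f1 x * g2 x) * (\sum_x f2 x * g1 x).
Proof.
move=> mK h1 h2 k1 k2.
rewrite !mulr_suml; under eq_bigr do rewrite mulr_sumr.
under [RHS]eq_bigr do rewrite mulr_sumr.
rewrite !pair_bigA /=.
pose phi (p : X * X) := (m p.1 p.2, m p.2 p.1).
have phiK : involutive phi by case=> x y; rewrite /phi /= !mK.
rewrite (reindex_inj (inv_inj phiK)) /=.
apply: eq_bigr => -[x y] _ /=.
rewrite h1 k1 h2 k2; ring.
Qed.

Unset Implicit Arguments.


Section Tensor.
Variables (R : realType) (V E : finType) (src tgt : E -> V)
  (I : E -> finType) (P : V -> finType).
Variable T : forall v : V, P v -> vconf I -> R[i].
Variable mu : messages R I.
Local Notation C := R[i].

Definition pm (U : {set V}) (x y : pconf P) : pconf P :=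
  [ffun v => if v \in U then x v else y v].
Definition vm (sd : E -> V) (U : {set V}) (x y : vconf I) : vconf I :=
  [ffun e => if sd e \in U then x e else y e].

Definition XT := (pconf P * pconf P * vconf I * vconf I * vconf I * vconf I)%type.

Definition xm U (x y : XT) : XT :=
  let: (s'1, s1, kS1, kT1, bS1, bT1) := x in
  let: (s'2, s2, kS2, kT2, bS2, bT2) := y in
  (pm U s'1 s'2, pm U s1 s2, vm src U kS1 kS2, vm tgt U kT1 kT2,
   vm src U bS1 bS2, vm tgt U bT1 bT2).

Lemma pmK U x y : pm U (pm U x y) (pm U y x) = x.
Proof. apply/ffunP => v. by rewrite !ffunE; case: (v \in U). Qed.
Lemma vmK sd U x y : vm sd U (vm sd U x y) (vm sd U y x) = x.
Proof. by apply/ffunP => e; rewrite !ffunE; case: (sd e \in U). Qed.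

Lemma xmK U x y : xm U (xm U x y) (xm U y x) = x.
Proof.
case: x => [[[[[a b] c] d] e] f]; case: y => [[[[[a' b'] c'] d'] e'] f'].
by rewrite /= !pmK !vmK.
Qed.

Definition summ6 (Op : operator R P) (M : edge_insertion R I)
  (s' s : pconf P) (kS kT bS bT : vconf I) : C :=
    Op s' s
    * (\prod_(v : V) ((T v (s' v) (side src v bS bT))^*)%C)
    * (\prod_(v : V) T v (s v) (side src v kS kT))
    * (\prod_(e : E) M e (kS e) (bS e) (kT e) (bT e)).

Definition summ Op M (x : XT) : C :=
  summ6 Op M x.1.1.1.1.1 x.1.1.1.1.2 x.1.1.1.2 x.1.1.2 x.1.2 x.2.

Lemma contract_flat Op M : contract src T Op M = \sum_(x : XT) summ Op M x.
Proof.
rewrite /contract.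
rewrite pair_bigA /= pair_bigA /= pair_bigA /= pair_bigA /= pair_bigA /=.
by apply: eq_bigr => -[[[[[a b] c] d] e] f].
Qed.


Definition Mt (F : {set E}) : edge_insertion R I :=
  fun e => if e \in F then @Pperp R E I mu e else @Pbp R E I mu e.

Lemma Ztilde_flat Op F : Ztilde src T mu Op F = \sum_(x : XT) summ Op (Mt F) x.
Proof. exact: contract_flat. Qed.

Definition wU6 (U : {set V}) (s' s : pconf P) (kS kT bS bT : vconf I) : C :=
    (\prod_(v | v \in U) ((T v (s' v) (side src v bS bT))^*)%C)
  * (\prod_(v | v \in U) T v (s v) (side src v kS kT))
  * (\prod_(e | src e \in U) (mu e false (kS e) (bS e) / Imsg mu e))
  * (\prod_(e | tgt e \in U) mu e true (kT e) (bT e)).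

Definition wC6 (U : {set V}) (F : {set E}) (s' s : pconf P) (kS kT bS bT : vconf I) : C :=
    (\prod_(v | v \notin U) ((T v (s' v) (side src v bS bT))^*)%C)
  * (\prod_(v | v \notin U) T v (s v) (side src v kS kT))
  * (\prod_(e | e \in F) Pperp mu (kS e) (bS e) (kT e) (bT e))
  * (\prod_(e | (e \notin F) && (src e \notin U)) (mu e false (kS e) (bS e) / Imsg mu e))
  * (\prod_(e | (e \notin F) && (tgt e \notin U)) mu e true (kT e) (bT e)).

Definition outside (U : {set V}) (F : {set E}) :=
  forall e, e \in F -> (src e \notin U) && (tgt e \notin U).

Lemma summ6_split U F Op s' s kS kT bS bT : outside U F ->
  summ6 Op (Mt F) s' s kS kT bS bT =
  Op s' s * (wU6 U s' s kS kT bS bT * wC6 U F s' s kS kT bS bT).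
Proof.
move=> out; rewrite /summ6 /wU6 /wC6.
rewrite (bigID (fun v => v \in U) predT (fun v => ((T v (s' v) (side src v bS bT))^*)%C)) /=.
rewrite (bigID (fun v => v \in U) predT (fun v => T v (s v) (side src v kS kT))) /=.
have eE : \prod_e Mt F e (kS e) (bS e) (kT e) (bT e) =
  (\prod_(e | e \in F) Pperp mu (kS e) (bS e) (kT e) (bT e)) *
  (\prod_(e | (e \notin F)) (mu e false (kS e) (bS e) / Imsg mu e) *
   \prod_(e | (e \notin F)) mu e true (kT e) (bT e)).
  rewrite (bigID (fun e => e \in F)) /=; congr (_ * _).
    by apply: eq_bigr => e; rewrite /Mt => ->.
  rewrite -big_split; apply: eq_bigr => e /negbTE.
  by rewrite /Mt => ->; rewrite /Pbp mulrAC.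
rewrite eE.
rewrite (bigID (fun e => src e \in U) (fun e => e \notin F)) /=.
rewrite (bigID (fun e => tgt e \in U) (fun e => e \notin F)) /=.
have -> : \prod_(e | (e \notin F) && (src e \in U)) (mu e false (kS e) (bS e) / Imsg mu e)
        = \prod_(e | src e \in U) (mu e false (kS e) (bS e) / Imsg mu e).
  apply: eq_bigl => e; case: (boolP (e \in F)) => //= eF.
  by have /andP[/negbTE -> _] := out e eF.
have -> : \prod_(e | (e \notin F) && (tgt e \in U)) mu e true (kT e) (bT e)
        = \prod_(e | tgt e \in U) mu e true (kT e) (bT e).
  apply: eq_bigl => e; case: (boolP (e \in F)) => //= eF.
  by have /andP[_ /negbTE ->] := out e eF.
ring.
Qed.


Hypothesis loc : is_local src tgt T.

Lemma side_in (U : {set V}) v a (b1 b2 c1 c2 : vconf I) : v \in U ->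
  T v a (side src v (vm src U b1 b2) (vm tgt U c1 c2)) = T v a (side src v b1 c1).
Proof.
move=> vU; apply: loc => e; rewrite /incident !ffunE.
case: eqP => [->|_]; first by rewrite vU.
by move=> /eqP ->; rewrite vU.
Qed.

Lemma side_out (U : {set V}) v a (b1 b2 c1 c2 : vconf I) : v \notin U ->
  T v a (side src v (vm src U b1 b2) (vm tgt U c1 c2)) = T v a (side src v b2 c2).
Proof.
move=> /negbTE vU; apply: loc => e; rewrite /incident !ffunE.
case: eqP => [->|_]; first by rewrite vU.
by move=> /eqP ->; rewrite vU.
Qed.

Lemma wU6_merge U s'1 s1 kS1 kT1 bS1 bT1 s'2 s2 kS2 kT2 bS2 bT2 :
  wU6 U (pm U s'1 s'2) (pm U s1 s2) (vm src U kS1 kS2) (vm tgt U kT1 kT2)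
        (vm src U bS1 bS2) (vm tgt U bT1 bT2) = wU6 U s'1 s1 kS1 kT1 bS1 bT1.
Proof.
rewrite /wU6; congr (_ * _ * _ * _).
- by apply: eq_bigr => v vU; rewrite side_in // ffunE vU.
- by apply: eq_bigr => v vU; rewrite side_in // ffunE vU.
- by apply: eq_bigr => e eU; rewrite !ffunE eU.
- by apply: eq_bigr => e eU; rewrite !ffunE eU.
Qed.

Lemma wC6_merge U F s'1 s1 kS1 kT1 bS1 bT1 s'2 s2 kS2 kT2 bS2 bT2 : outside U F ->
  wC6 U F (pm U s'1 s'2) (pm U s1 s2) (vm src U kS1 kS2) (vm tgt U kT1 kT2)
        (vm src U bS1 bS2) (vm tgt U bT1 bT2) = wC6 U F s'2 s2 kS2 kT2 bS2 bT2.
Proof.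
move=> out; rewrite /wC6; congr (_ * _ * _ * _ * _).
- by apply: eq_bigr => v vU; rewrite side_out // ffunE (negbTE vU).
- by apply: eq_bigr => v vU; rewrite side_out // ffunE (negbTE vU).
- apply: eq_bigr => e eF; have /andP[/negbTE h1 /negbTE h2] := out e eF.
  by rewrite !ffunE h1 h2.
- by apply: eq_bigr => e /andP[_ /negbTE eU]; rewrite !ffunE eU.
- by apply: eq_bigr => e /andP[_ /negbTE eU]; rewrite !ffunE eU.
Qed.

Definition dep (W : {set V}) (o : operator R P) :=
  forall s' s t' t : pconf P, (forall v, v \in W -> s' v = t' v /\ s v = t v) ->
    o s' s = o t' t.

Definition opM (o o' : operator R P) : operator R P := fun a b => o a b * o' a b.

Lemma Ztilde_cross U F G o1 o1' o2 o2' :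
  outside U F -> outside U G -> dep U o1 -> dep (~: U) o1' ->
  dep U o2 -> dep (~: U) o2' ->
  Ztilde src T mu (opM o1 o1') F * Ztilde src T mu (opM o2 o2') G =
  Ztilde src T mu (opM o1 o2') G * Ztilde src T mu (opM o2 o1') F.
Proof.
move=> oF oG d1 d1' d2 d2'.
rewrite !Ztilde_flat.
pose wu (x : XT) := wU6 U x.1.1.1.1.1 x.1.1.1.1.2 x.1.1.1.2 x.1.1.2 x.1.2 x.2.
pose wc H (x : XT) := wC6 U H x.1.1.1.1.1 x.1.1.1.1.2 x.1.1.1.2 x.1.1.2 x.1.2 x.2.
pose op (o : operator R P) (x : XT) := o x.1.1.1.1.1 x.1.1.1.1.2.
have sp (o o' : operator R P) H x : outside U H ->
    summ (opM o o') (Mt H) x = (op o x * wu x) * (op o' x * wc H x).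
  move=> oH; rewrite /summ (summ6_split U) // /opM /op /wu /wc; ring.
rewrite (eq_bigr _ (fun x _ => sp o1 o1' F x oF)).
rewrite (eq_bigr _ (fun x _ => sp o2 o2' G x oG)).
rewrite (eq_bigr _ (fun x _ => sp o1 o2' G x oG)).
rewrite (eq_bigr _ (fun x _ => sp o2 o1' F x oF)).
have inU (x y : XT) : forall v, v \in U ->
    (xm U x y).1.1.1.1.1 v = x.1.1.1.1.1 v /\ (xm U x y).1.1.1.1.2 v = x.1.1.1.1.2 v.
  case: x => [[[[[a b] c] d] e] f]; case: y => [[[[[a' b'] c'] d'] e'] f'] v vU.
  by rewrite /= !ffunE vU.
have inC (x y : XT) : forall v, v \in ~: U ->
    (xm U x y).1.1.1.1.1 v = y.1.1.1.1.1 v /\ (xm U x y).1.1.1.1.2 v = y.1.1.1.1.2 v.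
  case: x => [[[[[a b] c] d] e] f]; case: y => [[[[[a' b'] c'] d'] e'] f'] v.
  by rewrite inE => /negbTE vU; rewrite /= !ffunE vU.
have wuM (x y : XT) : wu (xm U x y) = wu x.
  case: x => [[[[[a b] c] d] e] f]; case: y => [[[[[a' b'] c'] d'] e'] f'].
  exact: wU6_merge.
have wcM H (x y : XT) : outside U H -> wc H (xm U x y) = wc H y.
  case: x => [[[[[a b] c] d] e] f]; case: y => [[[[[a' b'] c'] d'] e'] f'].
  exact: wC6_merge.
apply: (cross_sum (m := xm U)).
- exact: xmK.
- by move=> x y; rewrite /op (d1 _ _ _ _ (inU x y)) wuM.
- by move=> x y; rewrite /op (d2 _ _ _ _ (inU x y)) wuM.
- by move=> x y; rewrite /op (d1' _ _ _ _ (inC x y)) wcM.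
- by move=> x y; rewrite /op (d2' _ _ _ _ (inC x y)) wcM.
Qed.


Definition delta (W : {set V}) : operator R P :=
  fun s' s => ([forall v, (v \in W) ==> (s' v == s v)])%:R.

Definition can (W : {set V}) (Op : operator R P) : operator R P :=
  fun s' s => Op (pm W s' s) s.

Lemma neq_ex (p q : pconf P) : p != q -> exists v, p v != q v.
Proof.
case: (boolP [forall v, p v == q v]) => [/forallP h|/forallPn [v hv]] pq.
  by exfalso; move/eqP: pq; apply; apply/ffunP => v; apply/eqP.
by exists v.
Qed.

Lemma supp_dep (X : {set V}) (Op : operator R P) (p' p q' q : pconf P) : supported_on X Op ->
  (forall v, v \in X -> p' v = q' v /\ p v = q v) ->
  (forall v, v \notin X -> (p' v = p v <-> q' v = q v)) -> Op p' p = Op q' q.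
Proof.
move=> [c1 c2] hX hN.
case: (boolP [forall v, (v \notin X) ==> (p' v == p v)]) => [/forallP hd|/forallPn [v]].
  apply: c2 => // v vX; have := hd v; rewrite vX /= => /eqP e; split => //.
  by apply/(hN v vX).
rewrite negb_imply => /andP [vX ne].
rewrite (c1 p' p); last by exists v.
rewrite (c1 q' q) //; exists v => //; apply/eqP => e; move/eqP: ne; apply.
by apply/(hN v vX).
Qed.

Lemma can_dep (X W : {set V}) (Op : operator R P) : supported_on X Op -> X \subset W -> dep W (can W Op).
Proof.
move=> sOp XW s' s t' t h; rewrite /can.
apply: (supp_dep _ _ _ _ _ _ sOp) => v; rewrite !ffunE.
- by move=> vX; have vW := subsetP XW v vX; rewrite vW; apply: h.
- move=> vX; case: (boolP (v \in W)) => vW //.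
  by have [-> ->] := h v vW.
Qed.

Lemma can_fact (X W : {set V}) (Op : operator R P) : supported_on X Op -> X \subset W ->
  forall s' s, Op s' s = can W Op s' s * delta (~: W) s' s.
Proof.
move=> sOp XW s' s; rewrite /can /delta.
case: (boolP [forall v, (v \in ~: W) ==> (s' v == s v)]) => [/forallP hd|/forallPn [v]].
  rewrite mulr1; congr (Op _ s); apply/ffunP => v; rewrite ffunE.
  case: (boolP (v \in W)) => // vW; have := hd v; rewrite inE vW /=.
  by move/eqP.
rewrite negb_imply inE => /andP [vW ne]; rewrite mulr0.
apply: (proj1 sOp); exists v => //.
by apply: contra vW; apply: (subsetP XW).
Qed.

Lemma delta_dep (W : {set V}) : dep W (delta W).
Proof.
move=> s' s t' t h; rewrite /delta.
have e : [forall v, (v \in W) ==> (s' v == s v)] = [forall v, (v \in W) ==> (t' v == t v)].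
  apply/forallP/forallP => H v; have := H v;
  case: (boolP (v \in W)) => //= vW; by have [-> ->] := h v vW.
by rewrite e.
Qed.

Lemma id_fact (U : {set V}) : (@op_id R V P) = opM (delta U) (delta (~: U)).
Proof.
apply: funext => s'; apply: funext => s; rewrite /op_id /opM /delta.
case: (boolP (s' == s)) => [/eqP ->|ne].
  by rewrite !(introT forallP) ?mulr1 // => v; rewrite eqxx implybT.
have [v hv] := neq_ex _ _ ne.
case: (boolP (v \in U)) => vU.
  have -> : [forall v, (v \in U) ==> (s' v == s v)] = false.
    by apply/negbTE/forallPn; exists v; rewrite vU.
  by rewrite mul0r.
have -> : [forall v, (v \in ~: U) ==> (s' v == s v)] = false.
  by apply/negbTE/forallPn; exists v; rewrite inE vU.
by rewrite mulr0.
Qed.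

Lemma mul_unique (OA OB : operator R P) (s' s t : pconf P) :
  (forall t', t' != t -> OA s' t' * OB t' s = 0) ->
  op_mul OA OB s' s = OA s' t * OB t s.
Proof.
move=> h; rewrite /op_mul (bigD1 t) //= big1 ?addr0 //.
Qed.

Lemma mulA_fact (SA SB : {set V}) (OA OB : operator R P) : [disjoint SA & SB] ->
  supported_on SA OA -> supported_on SB OB ->
  op_mul OA OB = opM (can SA OA) (can (~: SA) OB).
Proof.
move=> dis sA sB; apply: funext => s'; apply: funext => s.
rewrite (mul_unique OA OB s' s (pm SA s s')); last first.
  move=> t' /(neq_ex _ _) [v]; rewrite ffunE; case: (boolP (v \in SA)) => vA ne.
    rewrite (proj1 sB t' s) ?mulr0 //; exists v => //.
    by rewrite (disjointFr dis vA).
  rewrite (proj1 sA s' t') ?mul0r //; exists v => //; by rewrite eq_sym.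
rewrite /opM /can; congr (_ * _).
  apply: (supp_dep _ _ _ _ _ _ sA) => v; rewrite !ffunE.
    by move=> ->.
  by move=> /negbTE ->.
congr (OB _ s); apply/ffunP => v; rewrite !ffunE inE.
by case: (v \in SA).
Qed.

Lemma mulB_fact (SA SB : {set V}) (OA OB : operator R P) : [disjoint SA & SB] ->
  supported_on SA OA -> supported_on SB OB ->
  op_mul OA OB = opM (can SB OB) (can (~: SB) OA).
Proof.
move=> dis sA sB; apply: funext => s'; apply: funext => s.
rewrite (mul_unique OA OB s' s (pm SB s' s)); last first.
  move=> t' /(neq_ex _ _) [v]; rewrite ffunE; case: (boolP (v \in SB)) => vB ne.
    rewrite (proj1 sA s' t') ?mul0r //; exists v; last by rewrite eq_sym.
    by rewrite (disjointFl dis vB).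
  rewrite (proj1 sB t' s) ?mulr0 //; by exists v.
rewrite /opM /can mulrC; congr (_ * _).
apply: (supp_dep _ _ _ _ _ _ sA) => v; rewrite !ffunE inE.
  by move=> vA; rewrite (disjointFr dis vA).
by case: (v \in SB).
Qed.

Lemma op_id_supp : supported_on set0 (@op_id R V P).
Proof.
split.
  move=> s' s [v _ ne]; rewrite /op_id; case: eqP => // e.
  by move: ne; rewrite e eqxx.
move=> s' s t' t _ h; rewrite /op_id.
have -> : s' = s by apply/ffunP => v; have [] := h v (negbT (in_set0 v)).
have -> : t' = t by apply/ffunP => v; have [] := h v (negbT (in_set0 v)).
by rewrite !eqxx.
Qed.


Lemma opA_eq (X W : {set V}) (Op : operator R P) : supported_on X Op -> X \subset W ->
  opM (can W Op) (delta (~: W)) = Op.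
Proof.
move=> sOp XW; apply: funext => s'; apply: funext => s.
by rewrite /opM -(can_fact _ _ _ sOp XW).
Qed.

Lemma opB_eq (X W : {set V}) (Op : operator R P) : supported_on X Op -> X \subset ~: W ->
  opM (delta W) (can (~: W) Op) = Op.
Proof.
move=> sOp XW; apply: funext => s'; apply: funext => s.
rewrite /opM mulrC (can_fact _ _ _ sOp XW) setCK //.
Qed.

Lemma outside0 U : outside U set0.
Proof. by move=> e; rewrite inE. Qed.

Section Generic.
Variables (U X1 X2 : {set V}) (O1 O2 : operator R P).
Hypotheses (s1 : supported_on X1 O1) (s2 : supported_on X2 O2)
  (h1 : X1 \subset U) (h2 : X2 \subset ~: U).
Let AB := opM (can U O1) (can (~: U) O2).

Let d1 : dep U (can U O1). Proof. exact: can_dep _ _ _ s1 h1. Qed.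
Let d2 : dep (~: U) (can (~: U) O2). Proof. exact: can_dep _ _ _ s2 h2. Qed.
Let dU : dep U (delta U). Proof. exact: delta_dep. Qed.
Let dC : dep (~: U) (delta (~: U)). Proof. exact: delta_dep. Qed.

Lemma gen_a : ZBP src T mu AB * ZBP src T mu (@op_id R V P) =
  ZBP src T mu O1 * ZBP src T mu O2.
Proof.
rewrite /ZBP (id_fact U) (Ztilde_cross U set0 set0 _ _ _ _ (outside0 U) (outside0 U) d1 d2 dU dC).
by rewrite (opA_eq _ _ _ s1 h1) (opB_eq _ _ _ s2 h2).
Qed.

Lemma gen_b l : outside U l ->
  Ztilde src T mu AB l * ZBP src T mu O2 = ZBP src T mu AB * Ztilde src T mu O2 l.
Proof.
move=> ol.
have := Ztilde_cross U l set0 _ _ _ _ ol (outside0 U) d1 d2 dU d2.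
by rewrite (opB_eq _ _ _ s2 h2).
Qed.

Lemma gen_c l : outside U l ->
  Ztilde src T mu O1 l * ZBP src T mu (@op_id R V P) =
  ZBP src T mu O1 * Ztilde src T mu (@op_id R V P) l.
Proof.
move=> ol.
have := Ztilde_cross U l set0 _ _ _ _ ol (outside0 U) d1 dC dU dC.
by rewrite (opA_eq _ _ _ s1 h1) -(id_fact U).
Qed.

End Generic.

End Tensor.

Section Comb.
Variables (V E : finType) (src tgt : E -> V).

Lemma path_tag (W : {ffun {set E} -> nat}) (p : seq (ivert W)) (x : ivert W) :
  path (@iadj V E src tgt W) x p ->
  connect (fun a b => [&& a \in loopset W, b \in loopset W, a != b &
                          ~~ compatible src tgt a b]) (tag x) (tag (last x p)).
Proof.
elim: p x => [|z p IH] x /=; first by move=> _; exact: connect0.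
move=> /andP [/andP [_ h] pth].
apply: connect_trans (IH z pth).
case: (boolP (tag x == tag z)) => [/eqP ->|ne]; first exact: connect0.
apply: connect1; rewrite ne /=.
move: h; rewrite (negbTE ne) /= => ->.
rewrite !inE andbT.
apply/andP; split.
  by case: x {IH ne} => l i /=; apply: leq_ltn_trans (ltn_ord i).
by case: z {IH ne pth} => l i /=; apply: leq_ltn_trans (ltn_ord i).
Qed.

Lemma gamma_conn (W : {ffun {set E} -> nat}) :
  cluster_connected src tgt W -> gamma_connected src tgt (loopset W).
Proof.
move=> cc; apply/forallP => l; apply/implyP => hl; apply/forallP => l'.
apply/implyP => hl'.
have hl0 : (0 < W l)%N by move: hl; rewrite inE.
have hl0' : (0 < W l')%N by move: hl'; rewrite inE.
pose x : ivert W := Tagged (fun l => 'I_(W l)) (Ordinal hl0).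
pose y : ivert W := Tagged (fun l => 'I_(W l)) (Ordinal hl0').
have := forallP (forallP cc x) y.
move/connectP => [p pth ey].
have := path_tag _ _ _ pth; rewrite -ey /=.
exact.
Qed.

Lemma outside_suppG (Gam : {set {set E}}) (S : {set V}) l :
  suppG src tgt Gam :&: S = set0 -> l \in Gam ->
  forall e, e \in l -> (src e \notin S) && (tgt e \notin S).
Proof.
move=> h lG e el.
have sub := bigcup_sup l lG (F := supp src tgt).
have inS (v : V) : incident src tgt v e -> v \notin S.
  move=> inc; apply/negP => vS.
  have : v \in suppG src tgt Gam :&: S.
    rewrite inE vS andbT; apply: (subsetP sub).
    by rewrite inE; apply/existsP; exists e; rewrite el.
  by rewrite h inE.
by rewrite !inS // /incident eqxx ?orbT.
Qed.

End Comb.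

Lemma ratio_eq (K : fieldType) (a b c d : K) :
  a * d = b * c -> b != 0 -> d != 0 -> a / b = c / d.
Proof.
move=> h b0 d0.
have -> : a = b * c / d by rewrite -h mulfK.
by field; rewrite b0 d0.
Qed.

Theorem mainTheorem9 (R : realType) (V E : finType) (src tgt : E -> V)
    (I : E -> finType) (P : V -> finType)
    (T : forall v : V, P v -> vconf I -> R[i])
    (mu : messages R I)
    (SA SB : {set V}) (OA OB : operator R P) :
  simple_graph src tgt ->
  is_local src tgt T ->
  [disjoint SA & SB] ->
  supported_on SA OA ->
  supported_on SB OB ->
  0 < Znet src T (@op_id R V P) ->
  bp_fixed_point src tgt T mu ->
  (* ratio-version correlator expansion hypotheses *)
  ZBP src T mu (@op_id R V P) != 0 ->
  ZBP src T mu OA != 0 ->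
  ZBP src T mu OB != 0 ->
  ZBP src T mu (op_mul OA OB) != 0 ->
  expval src T OA != 0 ->
  expval src T OB != 0 ->
  cluster_expansion src tgt SA SB T mu (@op_id R V P) ->
  cluster_expansion src tgt SA SB T mu OA ->
  cluster_expansion src tgt SA SB T mu OB ->
  cluster_expansion src tgt SA SB T mu (op_mul OA OB) ->
  correlator src T OA OB =
    expval src T OA * expval src T OB *
    (expC (\sum_(Gam : {set {set E}} | gamma_ok src tgt SA SB Gam)
             (Kfrak src tgt SA SB T mu (op_mul OA OB) Gam
              + Kfrak src tgt SA SB T mu (@op_id R V P) Gam
              - Kfrak src tgt SA SB T mu OA Gam
              - Kfrak src tgt SA SB T mu OB Gam)) - 1).
Proof.
move=> _ loc dis sA sB Z0pos _ h0 hA hB hAB _ _ ce0 ceA ceB ceAB.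
have hSBc : SB \subset ~: SA by apply/subsetP => v vB; rewrite inE (disjointFl dis vB).
have hSAc : SA \subset ~: SB by apply/subsetP => v vA; rewrite inE (disjointFr dis vA).
have eA := mulA_fact R V P SA SB OA OB dis sA sB.
have eB := mulB_fact R V P SA SB OA OB dis sA sB.
set AB := op_mul OA OB.
set id0 := @op_id R V P.
have LA : forall l, outside V E src tgt SA l ->
    Zloop src T mu AB l = Zloop src T mu OB l /\ Zloop src T mu OA l = Zloop src T mu id0 l.
  move=> l ol; split; rewrite /Zloop; apply: ratio_eq => //.
    have := gen_b R V E src tgt I P T mu loc SA SA SB OA OB sA sB (subxx SA) hSBc l ol.
    by rewrite -eA.
  exact: (gen_c R V E src tgt I P T mu loc SA SA OA sA (subxx SA) l ol).
have LB : forall l, outside V E src tgt SB l ->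
    Zloop src T mu AB l = Zloop src T mu OA l /\ Zloop src T mu OB l = Zloop src T mu id0 l.
  move=> l ol; split; rewrite /Zloop; apply: ratio_eq => //.
    have := gen_b R V E src tgt I P T mu loc SB SB SA OB OA sB sA (subxx SB) hSAc l ol.
    by rewrite -eB.
  exact: (gen_c R V E src tgt I P T mu loc SB SB OB sB (subxx SB) l ol).
have hBP : ZBP src T mu AB * ZBP src T mu id0 = ZBP src T mu OA * ZBP src T mu OB.
  have := gen_a R V E src tgt I P T mu loc SA SA SB OA OB sA sB (subxx SA) hSBc.
  by rewrite -eA.
pose cl Op := cl_term src tgt SA SB T mu Op.
have Zc_eq : forall (W : {ffun {set E} -> nat}) O1 O2,
    (forall l, (0 < W l)%N -> Zloop src T mu O1 l = Zloop src T mu O2 l) ->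
    Zcluster src T mu O1 W = Zcluster src T mu O2 W.
  move=> W O1 O2 h; apply: eq_bigr => l _.
  by case: (posnP (W l)) => [->|/h ->]; rewrite ?expr0.
have Dz : forall W, ~~ gamma_ok src tgt SA SB (loopset W) ->
    cl AB W + cl id0 W - cl OA W - cl OB W = 0.
  move=> W nok; rewrite /cl /cl_term.
  destruct (pselect (is_cluster src tgt SA SB W /\ cluster_connected src tgt W)) as [[[hloops hne] cc]|nc]; rewrite /=; last by rewrite !subr0 addr0.
  have gc := gamma_conn V E src tgt W cc.
  have allL : [forall l in loopset W, is_loop src tgt SA SB l].
    by apply/forallP => l; apply/implyP; rewrite inE; apply: hloops.
  move: nok; rewrite /gamma_ok allL gc /= negb_and !negbK => /orP [/eqP h|/eqP h].
    have ol l : (0 < W l)%N -> outside V E src tgt SA l.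
      by move=> lp; apply: (outside_suppG V E src tgt (loopset W)) h _; rewrite inE.
    rewrite (Zc_eq W AB OB) ?(Zc_eq W OA id0); first by ring.
      by move=> l /ol /LA [].
    by move=> l /ol /LA [].
  have ol l : (0 < W l)%N -> outside V E src tgt SB l.
    by move=> lp; apply: (outside_suppG V E src tgt (loopset W)) h _; rewrite inE.
  rewrite (Zc_eq W AB OA) ?(Zc_eq W OB id0); first by ring.
    by move=> l /ol /LB [].
  by move=> l /ol /LB [].
pose K Op Gam := Kfrak src tgt SA SB T mu Op Gam.
pose rs Op Gam (W : {ffun {set E} -> nat}) := if loopset W == Gam then cl Op W else 0.
have restr_hs : forall Op Gam, abs_summable (cl Op) -> has_sum (rs Op Gam) (K Op Gam).
  move=> Op Gam [M hM].
  have ab : abs_summable (rs Op Gam).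
    exists M => F u; apply: le_trans (hM F u); apply: ler_sum => W _.
    by rewrite /rs; case: ifP => _; rewrite ?normr0 ?normr_ge0.
  have [S hS] := abs_summable_has_sum ab.
  by rewrite /K /Kfrak -/(rs Op Gam) (csum_eq hS).
have tot : forall Op, abs_summable (cl Op) -> csum (cl Op) = \sum_Gam K Op Gam.
  move=> Op ab; apply: csum_eq.
  apply: has_sum_ext (has_sum_big (index_enum _) (fun Gam => restr_hs Op Gam ab)) => W.
  rewrite (bigD1 (loopset W)) //= /rs eqxx big1 ?addr0 //.
  by move=> Gam /negbTE; rewrite eq_sym => ->.
have comb0 : forall Gam, ~~ gamma_ok src tgt SA SB Gam ->
    K AB Gam + K id0 Gam - K OA Gam - K OB Gam = 0.
  move=> Gam nok.
  have h := has_sumD (has_sumD (has_sumD (restr_hs AB Gam ceAB.1) (restr_hs id0 Gam ce0.1))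
               (has_sumN (restr_hs OA Gam ceA.1))) (has_sumN (restr_hs OB Gam ceB.1)).
  apply: (has_sum_unique h); apply: has_sum_ext (has_sum0 _) => W.
  rewrite /rs; case: eqP => [e|_]; last by rewrite !subr0 addr0.
  by rewrite Dz ?e.
have eS : \sum_(Gam | gamma_ok src tgt SA SB Gam)
            (Kfrak src tgt SA SB T mu AB Gam + Kfrak src tgt SA SB T mu id0 Gam
             - Kfrak src tgt SA SB T mu OA Gam - Kfrak src tgt SA SB T mu OB Gam) =
          csum (cl AB) + csum (cl id0) - csum (cl OA) - csum (cl OB).
  rewrite (tot _ ceAB.1) (tot _ ce0.1) (tot _ ceA.1) (tot _ ceB.1).
  rewrite -big_split -!sumrB /=.
  rewrite [RHS](bigID (gamma_ok src tgt SA SB)) /= [X in _ + X]big1 ?addr0 //.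
rewrite eS.
rewrite /correlator /expval ceAB.2 ceA.2 ceB.2 ce0.2.
rewrite !expCD !expCN.
have -> : ZBP src T mu AB = ZBP src T mu OA * ZBP src T mu OB / ZBP src T mu id0.
  by rewrite -hBP mulfK.
set a := expC (csum (cl AB)); set b := expC (csum (cl id0)).
set c := expC (csum (cl OA)); set d := expC (csum (cl OB)).
have a0 : a != 0 by apply: expC_neq0.
have b0 : b != 0 by apply: expC_neq0.
have c0 : c != 0 by apply: expC_neq0.
have d0 : d != 0 by apply: expC_neq0.
set zA := ZBP src T mu OA; set zB := ZBP src T mu OB; set z0 := ZBP src T mu id0.
have z00 : z0 != 0 := h0.
clearbody a b c d zA zB z0.
by field; rewrite d0 c0 b0 z00.
Qed.
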